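(* Let $G$ be a connected graph with $n(G)\ge 5$ and $\omega(G)=n(G)-2$. Then $$n(G)-4\le \dim_l(G)\le n(G)-3,$$ where $\dim_l(G)=n(G)-3$ if and only if $G$ is $\{\Gamma_1,\Gamma_2\}$-free, and $\dim_l(G)=n(G)-4$ if and only if $G$ contains an induced subgraph isomorphic to $\Gamma_1$ or $\Gamma_2$.
   Context: All graphs are finite and simple. $n(G)$ is the number of vertices and $\omega(G)$ the clique number of $G$. For vertices $x,y$ of a connected graph $G$, $d_G(x,y)$ is the length of a shortest $x,y$-path. A vertex $w$ distinguishes vertices $u,v$ if $d_G(u,w)\neq d_G(v,w)$. A set $W\subseteq V(G)$ is a local resolving set of $G$ if for every pair of adjacent vertices $u,v\in V(G)\setminus W$ some vertex of $W$ distinguishes $u$ and $v$. The local metric dimension $\dim_l(G)$ is the minimum cardinality of a local resolving set of $G$. $\Gamma_1$ is the graph with vertex set $\{v_1,\dots,v_6\}$ and edge set $\{v_iv_j: i\ne j,\ i,j\in\{1,2,3,4\}\}\cup\{v_1v_5,v_1v_6,v_2v_5,v_3v_6\}$; $\Gamma_2$ is obtained from $\Gamma_1$ by adding the edge $v_5v_6$. A graph is $\{\Gamma_1,\Gamma_2\}$-free if it has no induced subgraph isomorphic to $\Gamma_1$ or to $\Gamma_2$. *)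

(* Defs.v *)
From mathcomp Require Import all_boot all_order.
Set Implicit Arguments. Unset Strict Implicit. Unset Printing Implicit Defensive.

Section Graphs.
Variables (T : finType) (e : rel T).

Definition simple_graph : Prop := symmetric e /\ irreflexive e.

Definition connected_graph : Prop := forall x y : T, connect e x y.

Fixpoint ball (k : nat) (x : T) : {set T} :=
  match k with
  | 0 => [set x]
  | k'.+1 => ball k' x :|: [set z | [exists w in ball k' x, e w z]]
  end.

(* d_G(x,y): least k with y in the k-ball of x (for a connected graph this is
   the length of a shortest x,y-path; it is < #|T|). *)
Definition dist (x y : T) : nat := find (fun k => y \in ball k x) (iota 0 #|T|).

Definition is_clique (A : {set T}) : bool :=
  [forall x in A, forall y in A, (x != y) ==> e x y].

Definition clique_number : nat := \max_(A : {set T} | is_clique A) #|A|.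

Definition distinguishes (w u v : T) : bool := dist u w != dist v w.

Definition local_resolving (W : {set T}) : bool :=
  [forall u, forall v, [&& u \notin W, v \notin W & e u v] ==>
                        [exists w in W, distinguishes w u v]].

(* local metric dimension: min cardinality of a local resolving set
   (setT is always local resolving, so the arg min is well defined) *)
Definition local_metric_dim : nat :=
  #|[arg min_(W < [set: T] | local_resolving W) #|W|]|.

Definition has_induced (H : rel 'I_6) : Prop :=
  exists f : 'I_6 -> T, injective f /\ forall i j, e (f i) (f j) = H i j.

End Graphs.

(* Gamma_1 on v1..v6 encoded as 0..5 *)
Definition gamma1_edge (i j : nat) : bool :=
  [|| (i < 4) && (j < 4) && (i != j),
      (i == 0) && (j == 4), (i == 0) && (j == 5),
      (i == 1) && (j == 4) | (i == 2) && (j == 5)].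

Definition Gamma1 : rel 'I_6 := fun i j => gamma1_edge i j || gamma1_edge j i.

Definition Gamma2 : rel 'I_6 :=
  fun i j => Gamma1 i j || ((i == 4 :> nat) && (j == 5 :> nat))
                        || ((i == 5 :> nat) && (j == 4 :> nat)).

Definition Gamma_free (T : finType) (e : rel T) : Prop :=
  ~ has_induced e Gamma1 /\ ~ has_induced e Gamma2.

(* Main.v *)
Require Import Defs.
From mathcomp Require Import all_boot all_order.
From mathcomp Require Import zify.
Set Implicit Arguments. Unset Strict Implicit. Unset Printing Implicit Defensive.

Section Dist.
Variables (T : finType) (e : rel T).
Hypothesis esym : symmetric e.

Lemma ball_S k x : ball e k x \subset ball e k.+1 x.
Proof. by rewrite /= subsetUl. Qed.

Lemma ball_mono j k x : j <= k -> ball e j x \subset ball e k x.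
Proof.
elim: k => [|k IH]; first by rewrite leqn0 => /eqP ->.
rewrite leq_eqVlt => /orP [/eqP -> //| ]; rewrite ltnS => /IH H.
exact: subset_trans H (ball_S _ _).
Qed.

Lemma ball0 x y : (y \in ball e 0 x) = (y == x).
Proof. by rewrite /= in_set1. Qed.

Lemma ball_stepP k x y : reflect (y \in ball e k x \/ exists2 w, w \in ball e k x & e w y) (y \in ball e k.+1 x).
Proof.
rewrite /= in_setU in_set; apply: (iffP orP) => [[H|/existsP [w /andP [H1 H2]]]|[H|[w H1 H2]]]; auto.
- by right; exists w.
- by right; apply/existsP; exists w; rewrite H1.
Qed.

Lemma ball_prep k u v w : e u v -> w \in ball e k v -> w \in ball e k.+1 u.
Proof.
move=> euv; elim: k w => [|k IH] w.
  rewrite ball0 => /eqP ->; apply/ball_stepP; right; exists u => //; by rewrite ball0.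
move=> /ball_stepP [H|[z H1 H2]].
  by apply: (subsetP (ball_S _ _)); apply: IH.
by apply/ball_stepP; right; exists z => //; apply: IH.
Qed.

Lemma ball_sym k x y : y \in ball e k x -> x \in ball e k y.
Proof.
elim: k x y => [|k IH] x y.
  by rewrite !ball0 eq_sym.
move=> /ball_stepP [H|[w H1 H2]].
  by apply: (subsetP (ball_S _ _)); apply: IH.
by apply: (@ball_prep k y w x); [rewrite esym | apply: IH].
Qed.

Lemma dist_le k x y : k < #|T| -> y \in ball e k x -> dist e x y <= k.
Proof.
move=> kT H; rewrite leqNgt; apply/negP => /(before_find 0).
by rewrite nth_iota // add0n H.
Qed.

Lemma dist_gt k x y : k < #|T| -> y \notin ball e k x -> k < dist e x y.
Proof.
move=> kT H; rewrite ltnNge; apply/negP => Hd.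
have Hs : dist e x y < size (iota 0 #|T|) by rewrite size_iota; exact: leq_ltn_trans Hd kT.
have := nth_find 0 (a:=fun k => y \in ball e k x) (s:=iota 0 #|T|).
rewrite has_find -/(dist e x y) Hs nth_iota ?add0n; last by rewrite -(size_iota 0 #|T|).
move=> /(_ isT).
move=> Hb; move/negP: H; apply; exact: (subsetP (ball_mono _ Hd)).
Qed.

Lemma dist_sym x y : dist e x y = dist e y x.
Proof. by apply: eq_find => k; apply/idP/idP => /ball_sym. Qed.

Lemma dist_tri u v w : e u v -> dist e u w <= (dist e v w).+1.
Proof.
move=> euv.
have Hs : dist e u w <= #|T| by rewrite /dist -{2}(size_iota 0 #|T|) find_size.
case: (ltnP (dist e v w) #|T|) => Hv; last exact: leq_trans Hs (leqW Hv).
case: (ltnP (dist e v w).+1 #|T|) => Hv'; last exact: leq_trans Hs Hv'.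
apply: dist_le => //; apply: ball_prep euv _.
have := nth_find 0 (a:=fun k => w \in ball e k v) (s:=iota 0 #|T|).
rewrite has_find size_iota -/(dist e v w) nth_iota ?add0n //; by apply.
Qed.

End Dist.


Lemma cliqueP (T : finType) (e : rel T) (C : {set T}) :
  reflect (forall x y, x \in C -> y \in C -> x != y -> e x y) (is_clique e C).
Proof.
apply: (iffP forallP) => [H x y xC yC nxy | H x].
  by move/implyP: (H x) => /(_ xC) /forallP /(_ y) /implyP /(_ yC) /implyP; apply.
apply/implyP => xC; apply/forallP => y; apply/implyP => yC; apply/implyP; exact: H.
Qed.

Lemma path_closed (T : finType) (e : rel T) (S : {set T}) x y :
  (forall u v, u \in S -> e u v -> v \in S) -> x \in S -> connect e x y -> y \in S.
Proof.
move=> cl xS /connectP [p pth ->]; elim: p x xS pth => [|z p IH] x xS //=.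
by move=> /andP [exz pz]; apply: IH => //; exact: cl exz.
Qed.

Lemma two_elems (T : finType) (A : {set T}) : 1 < #|A| -> exists x y, [/\ x \in A, y \in A & x != y].
Proof.
move=> H; have /card_gt0P [x xA] : 0 < #|A| by apply: ltnW.
have : 0 < #|A :\ x| by rewrite (cardsD1 x A) xA in H.
move=> /card_gt0P [y]; rewrite !inE => /andP [yx yA]; exists x, y; split => //; by rewrite eq_sym.
Qed.

Section Dist2.
Variables (T : finType) (e : rel T).
Hypotheses (esym : symmetric e) (eirr : irreflexive e) (T4 : 3 < #|T|).

Lemma dist1 u v : e u v -> dist e u v = 1.
Proof.
move=> H; apply/eqP; rewrite eqn_leq; apply/andP; split.
  apply: dist_le; first by apply: leq_trans T4.
  by apply: (ball_prep (v:=v)) => //; rewrite ball0.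
apply: dist_gt; first by apply: leq_trans T4.
rewrite ball0; apply/eqP => uv; by rewrite uv eirr in H.
Qed.

Lemma nball1 u v : u != v -> ~~ e u v -> v \notin ball e 1 u.
Proof.
move=> nuv neuv; apply/negP => /ball_stepP [|[w]]; first by rewrite ball0 eq_sym (negPf nuv).
by rewrite ball0 => /eqP ->; rewrite (negPf neuv).
Qed.

Lemma dist_n1 u v : u != v -> ~~ e u v -> 1 < dist e u v.
Proof. move=> H1 H2; apply: dist_gt; [exact: leq_trans T4 | exact: nball1]. Qed.

Lemma dist_diff x y w : w != x -> w != y -> e x w != e y w -> dist e x w != dist e y w.
Proof.
move=> wx wy; case Ex: (e x w); case Ey: (e y w) => // _.
  rewrite dist1 //; have := dist_n1 (u:=y) (v:=w); rewrite eq_sym wy Ey => /(_ isT isT).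
  by case: (dist e y w) => [|[|]].
rewrite (dist1 Ey); have := dist_n1 (u:=x) (v:=w); rewrite eq_sym wx Ex => /(_ isT isT).
by case: (dist e x w) => [|[|]].
Qed.

End Dist2.

Section Side.
Variables (T : finType) (e : rel T).
Hypotheses (esym : symmetric e) (eirr : irreflexive e) (conn : connected_graph e).
Hypothesis n5 : 5 <= #|T|.
Variable K : {set T}.
Hypotheses (Kcl : is_clique e K) (cardK : #|K| = #|T| - 2)
  (Kmax : forall C, is_clique e C -> #|C| <= #|T| - 2).
Variables a b : T.
Hypotheses (ab : a != b) (Kc : ~: K = [set a; b]).

Lemma aK : a \notin K.
Proof. by rewrite -in_setC Kc !inE eqxx. Qed.
Lemma bK : b \notin K.
Proof. by rewrite -in_setC Kc !inE eqxx orbT. Qed.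
Lemma allv x : [\/ x \in K, x = a | x = b].
Proof.
case xK: (x \in K); first by constructor 1.
have : x \in ~: K by rewrite in_setC xK.
by rewrite Kc !inE => /orP [/eqP ->|/eqP ->]; [constructor 2|constructor 3].
Qed.
Lemma Kadj x y : x \in K -> y \in K -> x != y -> e x y.
Proof. by move=> xK yK nxy; move/cliqueP: Kcl; apply. Qed.
Lemma K_ne : exists x, x \in K.
Proof. apply/card_gt0P; rewrite cardK; lia. Qed.
Lemma neqK x y : x \in K -> y \notin K -> x != y.
Proof. by move=> xK yK; apply/eqP => xy; move: xK; rewrite xy (negPf yK). Qed.

Lemma notall : exists2 w, w \in K & ~~ e w a.
Proof.
case: (boolP [forall w in K, e w a]) => [/forallP H|].
  have : is_clique e (a |: K).
    apply/cliqueP => x y; rewrite !inE => /orP [/eqP ->|xK] /orP [/eqP ->|yK]; rewrite ?eqxx //.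
    - move=> _; rewrite esym; exact: (implyP (H y)).
    - move=> _; exact: (implyP (H x)).
    - exact: Kadj.
  move/Kmax; rewrite cardsU1 aK cardK; lia.
by rewrite negb_forall => /existsP [w]; rewrite negb_imply => /andP [wK nw]; exists w.
Qed.

Definition hasA := [exists z in K, e z a].

Lemma noA_ab : ~~ hasA -> e a b.
Proof.
move=> nA; apply/negPn/negP => nab.
have [x xK] := K_ne.
have : x \in [set a].
  apply: (path_closed (x:=a)); last exact: conn; last by rewrite inE.
  move=> u v; rewrite inE => /eqP -> eav; rewrite inE.
  case: (allv v) => [vK|->|vb] //.
  - by move: nA; rewrite negb_exists => /forallP /(_ v); rewrite vK esym eav.
  - by move: eav; rewrite vb (negPf nab).
by rewrite inE => /eqP xa; move: xK; rewrite xa (negPf aK).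
Qed.

Lemma noA_B : ~~ hasA -> [exists z in K, e z b].
Proof.
move=> nA; case: (boolP [exists z in K, e z b]) => // nB.
have [x xK] := K_ne.
have : x \in [set a; b].
  apply: (path_closed (x:=a)); last exact: conn; last by rewrite !inE eqxx.
  move=> u v; rewrite !inE => /orP [/eqP ->|/eqP ->] euv;
  (case: (allv v) => [vK|va|vb]; rewrite ?va ?vb ?eqxx ?orbT //).
  - by move: nA; rewrite negb_exists => /forallP /(_ v); rewrite vK esym euv.
  - by move: nB; rewrite negb_exists => /forallP /(_ v); rewrite vK esym euv.
by rewrite !inE => /orP [/eqP xa|/eqP xb]; [move: xK; rewrite xa (negPf aK)| move: xK; rewrite xb (negPf bK)].
Qed.

Lemma T4 : 3 < #|T|. Proof. lia. Qed.

Lemma dist_a x : x \in K ->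
  dist e x a = if hasA then (if e x a then 1 else 2) else (if e x b then 2 else 3).
Proof.
move=> xK; have xa := neqK xK aK; have xb := neqK xK bK.
have T3 : 2 < #|T| by lia.
have T4' := T4.
case hA: hasA.
  case exa: (e x a); first by apply: dist1.
  move/existsP: hA => [z /andP [zK eza]].
  have xz : x != z by apply/eqP => xz; rewrite xz eza in exa.
  apply/eqP; rewrite eqn_leq; apply/andP; split.
    apply: dist_le => //; apply: (ball_prep (v:=z)); first exact: Kadj.
    by apply: (ball_prep (v:=a)) => //; rewrite ball0.
  by apply: dist_n1 => //; rewrite exa.
have nexa : ~~ e x a.
  by apply/negP => exa; move/negbT/negP: hA; apply; apply/existsP; exists x; rewrite xK.
have eab := noA_ab (negbT hA).
case exb: (e x b).
  apply/eqP; rewrite eqn_leq; apply/andP; split.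
    apply: dist_le => //; apply: (ball_prep (v:=b)) => //.
    by apply: (ball_prep (v:=a)); [rewrite esym | rewrite ball0].
  by apply: dist_n1.
move/existsP: (noA_B (negbT hA)) => [y /andP [yK eyb]].
have xy : x != y by apply/eqP => xy; rewrite xy eyb in exb.
apply/eqP; rewrite eqn_leq; apply/andP; split.
  apply: dist_le => //.
  apply: (ball_prep (v:=y)); first exact: Kadj.
  apply: (ball_prep (v:=b)) => //.
  by apply: (ball_prep (v:=a)); [rewrite esym | rewrite ball0].
apply: dist_gt => //; apply/negP => /ball_stepP [|[w]].
  by apply/negP; apply: nball1.
move=> /ball_stepP [|[w']]; first by rewrite ball0 => /eqP ->; rewrite (negPf nexa).
rewrite ball0 => /eqP -> exw ewa.
case: (allv w) => [wK|wa|wb].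
- by move/negbT/negP: hA; apply; apply/existsP; exists w; rewrite wK ewa.
- by move: exw; rewrite wa (negPf nexa).
- by move: exw; rewrite wb exb.
Qed.

Definition sig_a x := if hasA then e x a else e x b.

Lemma sig_dist x y : x \in K -> y \in K -> dist e x a != dist e y a -> sig_a x != sig_a y.
Proof.
move=> xK yK; rewrite !dist_a // /sig_a.
by case: hasA; case: (e x a); case: (e y a); case: (e x b); case: (e y b).
Qed.

End Side.


Section Main.
Variables (T : finType) (e : rel T).
Hypotheses (esym : symmetric e) (eirr : irreflexive e) (conn : connected_graph e).
Hypothesis n5 : 5 <= #|T|.
Variable K : {set T}.
Hypotheses (Kcl : is_clique e K) (cardK : #|K| = #|T| - 2)
  (Kmax : forall C, is_clique e C -> #|C| <= #|T| - 2).
Variables a b : T.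
Hypotheses (ab : a != b) (Kc : ~: K = [set a; b]).

Lemma ba : b != a. Proof. by rewrite eq_sym. Qed.
Lemma Kcb : ~: K = [set b; a]. Proof. by rewrite setUC. Qed.
Lemma T4m : 3 < #|T|. Proof. lia. Qed.

Notation sA := (sig_a e K a b).
Notation sB := (sig_a e K b a).

Lemma sA_dist x y : x \in K -> y \in K -> dist e x a != dist e y a -> sA x != sA y.
Proof. exact: (sig_dist esym eirr conn n5 Kcl cardK ab Kc). Qed.
Lemma sB_dist x y : x \in K -> y \in K -> dist e x b != dist e y b -> sB x != sB y.
Proof. exact: (sig_dist esym eirr conn n5 Kcl cardK ba Kcb). Qed.
Lemma notallA : exists2 w, w \in K & ~~ e w a.
Proof. exact: (notall esym n5 Kcl cardK Kmax ab Kc). Qed.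
Lemma notallB : exists2 w, w \in K & ~~ e w b.
Proof. exact: (notall esym n5 Kcl cardK Kmax ba Kcb). Qed.
Lemma noAB : ~~ hasA e K a -> hasA e K b.
Proof. exact: (noA_B esym conn n5 Kcl cardK ab Kc). Qed.
Lemma noBA : ~~ hasA e K b -> hasA e K a.
Proof. exact: (noA_B esym conn n5 Kcl cardK ba Kcb). Qed.
Lemma aKm : a \notin K. Proof. exact: (aK Kc). Qed.
Lemma bKm : b \notin K. Proof. exact: (bK Kc). Qed.
Lemma allvm x : [\/ x \in K, x = a | x = b]. Proof. exact: (allv Kc). Qed.
Lemma Kadjm x y : x \in K -> y \in K -> x != y -> e x y. Proof. exact: Kadj. Qed.
Lemma ddiff x y w : w != x -> w != y -> e x w != e y w -> dist e x w != dist e y w.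
Proof. exact: (dist_diff eirr T4m). Qed.
Lemma dist1m u v : e u v -> dist e u v = 1. Proof. exact: (dist1 eirr T4m). Qed.
Lemma Kne : exists x, x \in K. Proof. exact: (K_ne n5 Kcl cardK ab). Qed.
Lemma outab x : x \notin K -> x = a \/ x = b.
Proof. by case: (allvm x) => [xK|->|->]; [rewrite xK|left|right]. Qed.
Lemma neqa x : x \in K -> (x == a) = false.
Proof. by move=> xK; apply/eqP => xa; move: xK; rewrite xa (negbTE aKm). Qed.
Lemma neqb x : x \in K -> (x == b) = false.
Proof. by move=> xK; apply/eqP => xa; move: xK; rewrite xa (negbTE bKm). Qed.
Lemma neqa' x : x \in K -> (a == x) = false.
Proof. by move=> xK; rewrite eq_sym neqa. Qed.
Lemma neqb' x : x \in K -> (b == x) = false.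
Proof. by move=> xK; rewrite eq_sym neqb. Qed.
Lemma neqe x y : e x y -> x != y.
Proof. by move=> H; apply/eqP => xy; rewrite xy eirr in H. Qed.

Lemma localP (W : {set T}) : reflect (forall u v, u \notin W -> v \notin W -> e u v ->
   exists2 w, w \in W & dist e u w != dist e v w) (local_resolving e W).
Proof.
apply: (iffP forallP) => [H u v uW vW euv | H u].
  move: (H u) => /forallP /(_ v) /implyP; rewrite uW vW euv => /(_ isT) /existsP [w /andP [wW dw]].
  by exists w.
apply/forallP => v; apply/implyP => /and3P [uW vW euv].
have [w wW dw] := H u v uW vW euv; apply/existsP; exists w; by rewrite wW.
Qed.

Definition Pcl := exists p q r s, [/\ p \in K, q \in K, r \in K, s \in K &
  [/\ e p a && e p b, e q a && ~~ e q b, ~~ e r a && e r b & ~~ e s a && ~~ e s b]].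

Lemma lower (W : {set T}) : local_resolving e W -> #|~: W| <= 4 /\ (4 <= #|~: W| -> Pcl).
Proof.
move/localP => H.
have F0 : forall x y, x \in ~: W :&: K -> y \in ~: W :&: K -> x != y ->
    (a \in W) && (sA x != sA y) || (b \in W) && (sB x != sB y).
  move=> x y; rewrite !inE => /andP [xW xK] /andP [yW yK] xy.
  have [w wW dw] := H x y xW yW (Kadjm xK yK xy).
  case: (allvm w) => [wK|wa|wb].
  - have wx : x != w by apply/eqP => xw; rewrite xw wW in xW.
    have wy : y != w by apply/eqP => yw; rewrite yw wW in yW.
    by rewrite (dist1m (Kadjm xK wK wx)) (dist1m (Kadjm yK wK wy)) in dw.
  - subst w; by rewrite wW sA_dist.
  - subst w; by rewrite wW sB_dist ?orbT.
have Hs : #|~: W| = #|~: W :&: K| + #|~: W :\: K| by rewrite cardsID.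
have HKc : #|~: K| = 2 by rewrite Kc cards2 ab.
case aW: (a \in W); case bW: (b \in W).
- have D0 : ~: W :\: K = set0.
    apply/setP => u; rewrite !inE; case: (allvm u) => [->|->|->]; rewrite ?andbF ?aW ?bW //=; by case: (_ \in K).
  have inj : {in ~: W :&: K &, injective (fun x => (sA x, sB x))}.
    move=> x y xA yA [E1 E2]; apply/eqP; apply/negPn/negP => xy.
    by have := F0 x y xA yA xy; rewrite E1 E2 !eqxx /= !andbF.
  have := leq_card_in _ _ inj; rewrite card_prod card_bool => Hle.
  rewrite Hs D0 cards0 addn0; split => // H4.
  have Him : [set (sA x, sB x) | x in ~: W :&: K] = setT.
    apply/eqP; rewrite eqEcard subsetT card_in_imset // cardsT card_prod card_bool; lia.
  have getx : forall v, exists2 x, x \in K & v = (sA x, sB x).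
    move=> v; have : v \in [set (sA x, sB x) | x in ~: W :&: K] by rewrite Him inE.
    by move=> /imsetP [x]; rewrite inE => /andP [_ xK] ->; exists x.
  have [x1 x1K E1] := getx (true, true).
  have [x2 x2K E2] := getx (true, false).
  have [x3 x3K E3] := getx (false, true).
  have [x4 x4K E4] := getx (false, false).
  move: E1 E2 E3 E4; rewrite /sig_a.
  case hA: (hasA e K a); case hB: (hasA e K b).
  + move=> [E11 E12] [E21 E22] [E31 E32] [E41 E42]; exists x1, x2, x3, x4; split => //.
    by rewrite -E11 -E12 -E21 -E22 -E31 -E32 -E41 -E42.
  + by move=> _ [E E'] _ _; rewrite -E in E'.
  + by move=> _ [E E'] _ _; rewrite -E in E'.
  + by move: (noAB (negbT hA)); rewrite hB.
- have D1 : #|~: W :\: K| <= 1.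
    rewrite -(cards1 b); apply: subset_leq_card; apply/subsetP => u; rewrite !inE.
    by case: (allvm u) => [->|->|->]; rewrite ?aW ?eqxx /= ?andbF.
  have inj : {in ~: W :&: K &, injective sA}.
    move=> x y xA yA E1; apply/eqP; apply/negPn/negP => xy.
    by have := F0 x y xA yA xy; rewrite E1 bW !eqxx /= !andbF.
  have := leq_card_in _ _ inj; rewrite card_bool => Hle.
  split; lia.
- have D1 : #|~: W :\: K| <= 1.
    rewrite -(cards1 a); apply: subset_leq_card; apply/subsetP => u; rewrite !inE.
    by case: (allvm u) => [->|->|->]; rewrite ?bW ?eqxx /= ?andbF.
  have inj : {in ~: W :&: K &, injective sB}.
    move=> x y xA yA E1; apply/eqP; apply/negPn/negP => xy.
    by have := F0 x y xA yA xy; rewrite E1 aW !eqxx /= !andbF.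
  have := leq_card_in _ _ inj; rewrite card_bool => Hle.
  split; lia.
- have D1 : #|~: W :\: K| <= 2.
    rewrite -HKc; apply: subset_leq_card; apply/subsetP => u; rewrite !inE.
    by case/andP.
  have inj : {in ~: W :&: K &, injective (fun _ => tt)}.
    move=> x y xA yA _; apply/eqP; apply/negPn/negP => xy.
    by have := F0 x y xA yA xy; rewrite aW bW.
  have := leq_card_in _ _ inj; rewrite card_unit => Hle.
  split; lia.
Qed.

Lemma listW (s : seq T) : uniq s ->
  (forall u v, u \in s -> v \in s -> e u v -> exists2 w, w \notin s & dist e u w != dist e v w) ->
  local_resolving e (~: [set x in s]) /\ #|~: ~: [set x in s]| = size s.
Proof.
move=> us H; split.
  apply/localP => u v; rewrite !inE !negbK => uS vS euv.
  by have [w ws dw] := H u v uS vS euv; exists w; rewrite // !inE.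
by rewrite setCK cardsE; apply/card_uniqP.
Qed.


Lemma upper : exists W : {set T}, local_resolving e W /\ #|~: W| = 3.
Proof.
have aK' := aKm; have bK' := bKm.
case: (boolP (e a b && [forall z in K, e z a == e z b])) => [/andP [eab /forallP Hab] | Hn].
  have HabE : forall z, z \in K -> e z b = e z a.
    by move=> z zK; move/implyP: (Hab z) => /(_ zK) /eqP ->.
  have [x xK exa] : exists2 x, x \in K & e x a.
    case: (boolP (hasA e K a)) => [/existsP [x /andP [xK exa]]|nA]; first by exists x.
    move/existsP: (noAB nA) => [z /andP [zK ezb]]; exists z => //; by rewrite -HabE.
  pose S := K :&: [set z | e z a].
  have Hc : is_clique e ([set a; b] :|: S).
    apply/cliqueP => u v; rewrite !inE.
    move=> /orP [/orP [/eqP->|/eqP->]|/andP [uK ua]] /orP [/orP [/eqP->|/eqP->]|/andP [vK va]];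
      rewrite ?eqxx // => uv.
    - by rewrite esym.
    - by rewrite esym.
    - by rewrite esym HabE.
    - by rewrite HabE.
    - exact: Kadjm.
  have Hd : [set a; b] :&: S = set0.
    apply/setP => u; rewrite !inE; apply/negP => /andP [/orP [/eqP->|/eqP->] /andP [H1 _]].
    + by rewrite H1 in aK'.
    + by rewrite H1 in bK'.
  have := Kmax Hc; have := cardsUI [set a; b] S; rewrite Hd cards0 cards2 ab addn0 => ->.
  have := cardsID [set z | e z a] K; rewrite -/S => HKS HS.
  have [y [y' [yK y'K yy']]] : exists y y', [/\ y \in K :\: [set z | e z a], y' \in K :\: [set z | e z a] & y != y'].
    apply: two_elems; lia.
  move: yK y'K; rewrite !inE => /andP [nya yK] /andP [ny'a y'K].
  have xy : (x == y) = false by apply/negbTE; apply/eqP => E; rewrite E (negbTE nya) in exa.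
  have xy' : (y' == x) = false by apply/negbTE; apply/eqP => E; rewrite -E (negbTE ny'a) in exa.
  have xb := neqb xK.
  have yb := neqb yK.
  have y'b := neqb y'K.
  have ax := neqa' xK.
  have ay := neqa' yK.
  have y'y : (y' == y) = false by apply/negbTE; rewrite eq_sym.
  have exy' : e x y' by apply: Kadjm => //; rewrite eq_sym xy'.
  have eby' : e b y' = false by rewrite esym HabE // (negbTE ny'a).
  have Hu : uniq [:: x; y; b].
    by rewrite /= !inE xy xb yb.
  suff Hl : forall u v, u \in [:: x; y; b] -> v \in [:: x; y; b] -> e u v -> exists2 w, w \notin [:: x; y; b] & dist e u w != dist e v w.
    have [HW cW] := listW Hu Hl; by eexists; split; [exact: HW | rewrite cW].
  move=> u v; rewrite !inE => /or3P [] /eqP -> /or3P [] /eqP -> euv; rewrite ?eirr // in euv.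
  + exists a; first by rewrite !inE ax ay (negbTE ab).
    by apply: ddiff; rewrite ?ax ?ay ?exa ?(negbTE nya).
  + exists y'; first by rewrite !inE xy' y'y y'b.
    by apply: ddiff; rewrite ?xy' ?y'b ?exy' ?eby'.
  + exists a; first by rewrite !inE ax ay (negbTE ab).
    by apply: ddiff; rewrite ?ax ?ay ?exa ?(negbTE nya).
  + by rewrite HabE // (negbTE nya) in euv.
  + exists y'; first by rewrite !inE xy' y'y y'b.
    by apply: ddiff; rewrite ?xy' ?y'b ?exy' ?eby'.
  + by rewrite esym HabE // (negbTE nya) in euv.
have [z zK Hz] : exists2 z, z \in K & e a b -> e z a != e z b.
  case eab: (e a b).
    move: Hn; rewrite eab /= negb_forall => /existsP [z]; rewrite negb_imply => /andP [zK Hz].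
    by exists z.
  by have [z zK] := Kne; exists z.
have [x0 [x0K x0z]] : exists x0, x0 \in K /\ (z == x0) = false.
  have : 0 < #|K :\ z| by have := cardK; rewrite (cardsD1 z K) zK; lia.
  move=> /card_gt0P [x0]; rewrite !inE => /andP [x0z x0K]; exists x0; split => //.
  by apply/negbTE; rewrite eq_sym.
have x0a := neqa x0K.
have x0b := neqb x0K.
have za := neqa zK.
have zb := neqb zK.
have Hu : uniq [:: x0; a; b].
  by rewrite /= !inE x0a x0b (negbTE ab).
suff Hl : forall u v, u \in [:: x0; a; b] -> v \in [:: x0; a; b] -> e u v -> exists2 w, w \notin [:: x0; a; b] & dist e u w != dist e v w.
  have [HW cW] := listW Hu Hl; by eexists; split; [exact: HW | rewrite cW].
have wit : forall c, c \in [:: a; b] -> e x0 c ->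
    exists2 w, w \notin [:: x0; a; b] & (e x0 w != e c w) && [&& w != x0, w != a & w != b].
  move=> c; rewrite !inE => /orP [] /eqP -> ex0c.
    have [w wK nwa] := notallA.
    have wx0 : (w == x0) = false by apply/negbTE; apply/eqP => E; rewrite E ex0c in nwa.
    have wa := neqa wK.
    have wb := neqb wK.
    exists w; first by rewrite !inE wx0 wa wb.
    rewrite wx0 wa wb Kadjm //; first by rewrite esym (negbTE nwa).
    by rewrite eq_sym wx0.
  have [w wK nwa] := notallB.
  have wx0 : (w == x0) = false by apply/negbTE; apply/eqP => E; rewrite E ex0c in nwa.
  have wa := neqa wK.
  have wb := neqb wK.
  exists w; first by rewrite !inE wx0 wa wb.
  rewrite wx0 wa wb Kadjm //; first by rewrite esym (negbTE nwa).
  by rewrite eq_sym wx0.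
have bin : b \in [:: a; b] by rewrite !inE eqxx orbT.
move=> u v; rewrite !inE => /or3P [] /eqP -> /or3P [] /eqP -> euv; rewrite ?eirr // in euv.
- have [w wn /andP [H1 /and3P [H2 H3 H4]]] := wit a (mem_head _ _) euv.
  by exists w => //; apply: ddiff.
- have [w wn /andP [H1 /and3P [H2 H3 H4]]] := wit b bin euv.
  by exists w => //; apply: ddiff.
- rewrite esym in euv.
  have [w wn /andP [H1 /and3P [H2 H3 H4]]] := wit a (mem_head _ _) euv.
  by exists w => //; apply: ddiff; rewrite // eq_sym.
- exists z; first by rewrite !inE x0z za zb.
  by apply: ddiff; rewrite ?za ?zb // (esym a) (esym b) Hz.
- rewrite esym in euv.
  have [w wn /andP [H1 /and3P [H2 H3 H4]]] := wit b bin euv.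
  by exists w => //; apply: ddiff; rewrite // eq_sym.
- exists z; first by rewrite !inE x0z za zb.
  by apply: ddiff; rewrite ?za ?zb // (esym a) (esym b) eq_sym Hz // esym.
Qed.

Lemma fourW : Pcl -> exists W : {set T}, local_resolving e W /\ #|~: W| = 4.
Proof.
move=> [p [q [r [s [pK qK rK sK [/andP [pa pb] /andP [qa nqb] /andP [nra rb] /andP [nsa nsb]]]]]]].
have nqb' := negbTE nqb; have nra' := negbTE nra; have nsa' := negbTE nsa; have nsb' := negbTE nsb.
have key : forall u v, u \in [:: p; q; r; s] -> v \in [:: p; q; r; s] ->
    u = v \/ (e u a != e v a) || (e u b != e v b).
  move=> u v; rewrite !inE => /or4P [] /eqP -> /or4P [] /eqP ->;
    rewrite ?pa ?pb ?qa ?nqb' ?nra' ?rb ?nsa' ?nsb'; by [left | right].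
have inK : forall u, u \in [:: p; q; r; s] -> u \in K.
  by move=> u; rewrite !inE => /or4P [] /eqP ->.
have Hu : uniq [:: p; q; r; s].
  have dif : forall u v, u \in [:: p; q; r; s] -> v \in [:: p; q; r; s] ->
      (e u a != e v a) || (e u b != e v b) -> u != v.
    by move=> u v _ _ H; apply/eqP => uv; move: H; rewrite uv !eqxx.
  rewrite /= !inE !negb_or; rewrite !dif ?inE ?eqxx ?orbT //;
    by rewrite ?pa ?pb ?qa ?nqb' ?nra' ?rb ?nsa' ?nsb'.
suff Hl : forall u v, u \in [:: p; q; r; s] -> v \in [:: p; q; r; s] -> e u v ->
    exists2 w, w \notin [:: p; q; r; s] & dist e u w != dist e v w.
  have [HW cW] := listW Hu Hl; by eexists; split; [exact: HW | rewrite cW].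
move=> u v uS vS euv.
have uK := inK u uS; have vK := inK v vS.
case: (key u v uS vS) => [uv|/orP [Ha|Hb]]; first by rewrite uv eirr in euv.
- exists a; first by apply/negP => /inK; rewrite (negbTE aKm).
  by apply: ddiff; rewrite ?neqa'.
- exists b; first by apply/negP => /inK; rewrite (negbTE bKm).
  by apply: ddiff; rewrite ?neqb'.
Qed.

Lemma P_gam : Pcl -> has_induced e Gamma1 \/ has_induced e Gamma2.
Proof.
move=> [p [q [r [s [pK qK rK sK [/andP [pa pb] /andP [qa nqb] /andP [nra rb] /andP [nsa nsb]]]]]]].
have nqb' := negbTE nqb; have nra' := negbTE nra; have nsa' := negbTE nsa; have nsb' := negbTE nsb.
have dif : forall u v, (e u a != e v a) || (e u b != e v b) -> u != v.
  by move=> u v H; apply/eqP => uv; move: H; rewrite uv !eqxx.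
have pq : p != q by apply: dif; rewrite pb nqb' /= orbT.
have pr : p != r by apply: dif; rewrite pa nra'.
have ps : p != s by apply: dif; rewrite pa nsa'.
have qr : q != r by apply: dif; rewrite qa nra'.
have qs : q != s by apply: dif; rewrite qa nsa'.
have rs : r != s by apply: dif; rewrite rb nsb' /= orbT.
have epq := Kadjm pK qK pq; have epr := Kadjm pK rK pr; have eps := Kadjm pK sK ps.
have eqr := Kadjm qK rK qr; have eqs := Kadjm qK sK qs; have ers := Kadjm rK sK rs.
have eqp : e q p by rewrite esym. have erp : e r p by rewrite esym.
have esp : e s p by rewrite esym. have erq : e r q by rewrite esym.
have esq : e s q by rewrite esym. have esr : e s r by rewrite esym.
have ap : e a p by rewrite esym. have bp : e b p by rewrite esym.
have aq : e a q by rewrite esym. have bq : e b q = false by rewrite esym.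
have ar : e a r = false by rewrite esym. have br : e b r by rewrite esym.
have as_ : e a s = false by rewrite esym. have bs : e b s = false by rewrite esym.
have Hu : uniq [:: p; q; r; s; a; b].
  by rewrite /= !inE !negb_or pq pr ps qr qs rs ab /= (neqa pK) (neqa qK) (neqa rK) (neqa sK) (neqb pK) (neqb qK) (neqb rK) (neqb sK).
pose f := fun i : 'I_6 => nth a [:: p; q; r; s; a; b] i.
have finj : injective f.
  move=> [i Hi] [j Hj]; rewrite /f /= => /eqP; rewrite nth_uniq // => /eqP ij.
  exact: val_inj.
have adj : forall i j, e (f i) (f j) = (if e a b then Gamma2 i j else Gamma1 i j).
  move=> [i Hi] [j Hj]; rewrite /f /Gamma2 /Gamma1 /gamma1_edge /=.
  case: i Hi => [|[|[|[|[|[|i]]]]]] Hi //; case: j Hj => [|[|[|[|[|[|j]]]]]] Hj //=;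
  rewrite ?eirr ?epq ?epr ?eps ?eqr ?eqs ?ers ?eqp ?erp ?esp ?erq ?esq ?esr
    ?pa ?pb ?qa ?nqb' ?nra' ?rb ?nsa' ?nsb' ?ap ?bp ?aq ?bq ?ar ?br ?as_ ?bs;
  by case E: (e a b); rewrite /= ?E // esym ?E.
case eab: (e a b); [right | left]; exists f; split => // i j; by rewrite adj eab.
Qed.

Notation o k := (@Ordinal 6 k isT).

Lemma indP (G : rel 'I_6) :
  G (o 4) (o 2) = false -> G (o 4) (o 3) = false -> G (o 5) (o 1) = false -> G (o 5) (o 3) = false ->
  G (o 0) (o 4) -> G (o 0) (o 5) -> G (o 1) (o 4) -> G (o 2) (o 5) ->
  G (o 1) (o 5) = false -> G (o 2) (o 4) = false -> G (o 3) (o 4) = false -> G (o 3) (o 5) = false ->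
  has_induced e G -> Pcl.
Proof.
move=> G42 G43 G51 G53 G04 G05 G14 G25 G15 G24 G34 G35 [f [finj fG]].
have inK : forall i j, i != j -> G i j = false -> f i \in K -> f j \notin K.
  move=> i j ij Gij fiK; apply/negP => fjK.
  have fij : f i != f j by apply/eqP => /finj /eqP; rewrite (negbTE ij).
  by have := fG i j; rewrite Kadjm // Gij.
have out3 : forall i j k, i != j -> j != k -> i != k ->
    f i \notin K -> f j \notin K -> f k \notin K -> False.
  move=> i j k ij jk ik fi fj fk.
  have dij : f i != f j by apply/eqP => /finj /eqP; rewrite (negbTE ij).
  have djk : f j != f k by apply/eqP => /finj /eqP; rewrite (negbTE jk).
  have dik : f i != f k by apply/eqP => /finj /eqP; rewrite (negbTE ik).
  move: dij djk dik; case/outab: fi => ->; case/outab: fj => ->; case/outab: fk => ->;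
    by rewrite ?eqxx.
have [f4 f5] : f (o 4) \notin K /\ f (o 5) \notin K.
  case f4K: (f (o 4) \in K).
    have f2 := inK (o 4) (o 2) isT G42 f4K; have f3 := inK (o 4) (o 3) isT G43 f4K.
    case f5K: (f (o 5) \in K).
      have f1 := inK (o 5) (o 1) isT G51 f5K.
      by case: (out3 (o 1) (o 2) (o 3) isT isT isT f1 f2 f3).
    by case: (out3 (o 2) (o 3) (o 5) isT isT isT f2 f3 (negbT f5K)).
  case f5K: (f (o 5) \in K); last by [].
  have f1 := inK (o 5) (o 1) isT G51 f5K; have f3 := inK (o 5) (o 3) isT G53 f5K.
  by case: (out3 (o 1) (o 3) (o 4) isT isT isT f1 f3 (negbT f4K)).
have inKi : forall i, i != o 4 -> i != o 5 -> i != o 4 -> f i \in K.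
  move=> i i4 i5 _; apply/negPn/negP => fi.
  exact: (out3 i (o 4) (o 5) i4 isT i5 fi f4 f5).
have f0 := inKi (o 0) isT isT isT; have f1 := inKi (o 1) isT isT isT.
have f2 := inKi (o 2) isT isT isT; have f3 := inKi (o 3) isT isT isT.
have d45 : f (o 4) != f (o 5) by apply/eqP => /finj.
case/outab: f4 => E4; case/outab: f5 => E5; rewrite ?E4 ?E5 ?eqxx // in d45.
- exists (f (o 0)), (f (o 1)), (f (o 2)), (f (o 3)); split => //.
  by rewrite -E4 -E5 !fG G04 G05 G14 G15 G24 G25 G34 G35.
- exists (f (o 0)), (f (o 2)), (f (o 1)), (f (o 3)); split => //.
  by rewrite -E4 -E5 !fG G04 G05 G14 G15 G24 G25 G34 G35.
Qed.

Lemma gam_P : has_induced e Gamma1 \/ has_induced e Gamma2 -> Pcl.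
Proof. by case; apply: indP. Qed.

End Main.


Theorem corollary2p5 (T : finType) (e : rel T) :
  simple_graph e -> connected_graph e ->
  5 <= #|T| -> clique_number e = #|T| - 2 ->
  [/\ #|T| - 4 <= local_metric_dim e <= #|T| - 3,
      local_metric_dim e = #|T| - 3 <-> Gamma_free e &
      local_metric_dim e = #|T| - 4 <-> (has_induced e Gamma1 \/ has_induced e Gamma2)].
Proof.
move=> [esym eirr] conn n5 om.
have c0 : 0 < #|[pred A : {set T} | is_clique e A]|.
  apply/card_gt0P; exists set0; rewrite inE; apply/cliqueP => x y; by rewrite inE.
have [K Kcl HK] := @eq_bigmax_cond _ [pred A : {set T} | is_clique e A] (fun A => #|A|) c0.
have cardK : #|K| = #|T| - 2 by rewrite -HK -om.
have Kmax : forall C, is_clique e C -> #|C| <= #|T| - 2.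
  by move=> C HC; rewrite -om /clique_number; apply: leq_bigmax_cond.
have : #|~: K| == 2 by have := cardsC K; rewrite cardK; lia.
move=> /cards2P [a [b [ab Kc]]].
have lrT : local_resolving e [set: T].
  by apply/forallP => u; apply/forallP => v; rewrite inE.
rewrite /local_metric_dim; case: (arg_minnP (fun W : {set T} => #|W|) lrT) => W0 lr0 min0.
have [lo1 lo2] := lower esym eirr conn n5 Kcl cardK ab Kc lr0.
have C0 := cardsC W0.
have [W1 [lr1 c1]] := upper esym eirr conn n5 Kcl cardK Kmax ab Kc.
have m1 := min0 W1 lr1; have C1 := cardsC W1.
have eqP4 : #|W0| = #|T| - 4 <-> Pcl e K a b.
  split => [H|HP]; first by apply: lo2; lia.
  have [W2 [lr2 c2]] := fourW eirr n5 Kcl cardK ab Kc HP.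
  have := min0 W2 lr2; have := cardsC W2; lia.
have eqG : Pcl e K a b <-> (has_induced e Gamma1 \/ has_induced e Gamma2).
  split; [exact: (P_gam esym eirr Kcl ab Kc) | exact: (gam_P Kcl Kc)].
split.
- apply/andP; split; lia.
- split => [H | [n1 n2]].
    split => HG.
    + have : Pcl e K a b by apply/eqG; left.
      move/eqP4; lia.
    + have : Pcl e K a b by apply/eqG; right.
      move/eqP4; lia.
  have : ~ (#|W0| = #|T| - 4).
    by move/eqP4/eqG => [] //.
  lia.
- by rewrite eqP4.
Qed.
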